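(* Let $P$ and $P'$ be simple polyhedra in $\mathbb{R}^3$ that are combinatorially equivalent to each other (with a fixed combinatorial equivalence). Suppose that each face of a natural development of $P$ is affine-equivalent to the corresponding face of a natural development of $P'$. Then $P$ and $P'$ are affine-equivalent.
   Context: A polyhedron is a connected two-dimensional polyhedral surface in $\mathbb{R}^3$ composed of finitely many convex polygons (its faces), connected in the sense that one can pass from any face to any other by crossing edges (not just vertices). A closed convex polyhedron is strictly convex if none of its dihedral angles equals $\pi$; a strictly convex closed polyhedron is simple if each of its vertices is incident to exactly three edges. Two polyhedra are combinatorially equivalent if there is an incidence-preserving bijection between their vertices, edges and faces. A natural development of a polyhedron $P$ is a finite collection of convex polygons in the plane in one-to-one correspondence with the faces of $P$, each polygon congruent to the corresponding face, such that two elements (faces, sides, vertices) of the collection are incident iff the corresponding elements of $P$ are incident. Two polygons (resp. two combinatorially equivalent polyhedra) are affine-equivalent if there is a nondegenerate affine map carrying the first onto the second and carrying each vertex, edge (and face) to the corresponding one. *)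

(* Defs.v *)
From HB Require Import structures.
From mathcomp Require Import all_boot all_order all_algebra.
From mathcomp Require Import reals.
Set Implicit Arguments. Unset Strict Implicit. Unset Printing Implicit Defensive.
Import Order.TTheory GRing.Theory Num.Theory.
Local Open Scope ring_scope.

Section Polyhedra.
Variable R : realType.

Definition dot (u w : 'rV[R]_3) : R := \sum_(i < 3) u 0 i * w 0 i.

(* A convex polyhedron is described by a finite vertex type V and the
   positions p : V -> R^3 of its vertices; the solid is conv (p V). *)
Variable V : finType.
Variable p : V -> 'rV[R]_3.

Definition exposed (S : {set V}) : Prop :=
  exists (n : 'rV[R]_3) (c : R), n != 0 /\
    (forall v, dot n (p v) <= c) /\
    (forall v, (dot n (p v) == c) = (v \in S)).

(* The solid conv(p V) has nonempty interior: no plane contains all vertices. *)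
Definition full_dimensional : Prop :=
  forall (n : 'rV[R]_3) (c : R), n != 0 -> exists v, dot n (p v) != c.

(* p describes a closed convex polyhedron (boundary of a 3-dimensional convex
   polytope) whose vertices are exactly the points p v (each one a vertex). *)
Definition closed_convex_polyhedron : Prop :=
  full_dimensional /\ forall v, exposed [set v].

Definition is_edge (e : {set V}) : Prop := exposed e /\ #|e| = 2%N.

(* Faces: 2-dimensional faces (facets), given by their vertex sets; the
   vertex set must span a plane.  Taking the faces to be the facets encodes
   strict convexity (no dihedral angle equal to pi). *)
Definition is_face (F : {set V}) : Prop :=
  exposed F /\
  exists u v w, [/\ u \in F, v \in F, w \in F &
    \rank (col_mx (p v - p u) (p w - p u)) = 2%N].

Definition simple_polyhedron : Prop :=
  closed_convex_polyhedron /\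
  forall v, exists e1 e2 e3,
    [/\ is_edge e1, is_edge e2 & is_edge e3] /\
    [/\ v \in e1, v \in e2 & v \in e3] /\
    [/\ e1 <> e2, e1 <> e3 & e2 <> e3] /\
    (forall e, is_edge e -> v \in e -> e = e1 \/ e = e2 \/ e = e3).

End Polyhedra.

Definition bij_on (X Y : Type) (A : X -> Prop) (B : Y -> Prop) (f : X -> Y) :=
  [/\ forall x, A x -> B (f x),
      forall x y, A x -> A y -> f x = f y -> x = y &
      forall y, B y -> exists x, A x /\ f x = y].

Definition comb_equiv (R : realType) (V V' : finType)
  (p : V -> 'rV[R]_3) (p' : V' -> 'rV[R]_3)
  (fV : V -> V') (fE fF : {set V} -> {set V'}) : Prop :=
  [/\ bijective fV,
      bij_on (is_edge p) (is_edge p') fE /\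
      bij_on (is_face p) (is_face p') fF,
      forall v e, is_edge p e -> (v \in e) = (fV v \in fE e),
      forall v F, is_face p F -> (v \in F) = (fV v \in fF F) &
      forall e F, is_edge p e -> is_face p F ->
        (e \subset F) = (fE e \subset fF F)].

(* The affine map x |-> x *m A + b is nondegenerate on the plane of the
   face F, i.e. its linear part is injective on the direction space
   spanned by the vectors p v - p u0 (v in F), u0 in F. *)
Definition nondegenerate_on (R : realType) (V : finType) (p : V -> 'rV[R]_3)
  (F : {set V}) (A : 'M[R]_3) : Prop :=
  exists2 u0, u0 \in F &
    forall c : V -> R,
      (\sum_(v in F) c v *: (p v - p u0)) *m A = 0 ->
      \sum_(v in F) c v *: (p v - p u0) = 0.

Definition face_affine_equiv (R : realType) (V V' : finType)
  (p : V -> 'rV[R]_3) (p' : V' -> 'rV[R]_3) (fV : V -> V') (F : {set V}) : Prop :=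
  exists (A : 'M[R]_3) (b : 'rV[R]_3),
    nondegenerate_on p F A /\ forall v, v \in F -> p v *m A + b = p' (fV v).

Definition affine_equiv (R : realType) (V V' : finType)
  (p : V -> 'rV[R]_3) (p' : V' -> 'rV[R]_3) (fV : V -> V') : Prop :=
  exists (A : 'M[R]_3) (b : 'rV[R]_3),
    A \in unitmx /\ forall v, p v *m A + b = p' (fV v).

(* Main.v *)
Require Import Defs.
From HB Require Import structures.
From mathcomp Require Import all_boot all_order all_algebra.
From mathcomp Require Import reals.
From mathcomp Require Import ring lra.
From Stdlib Require Import Classical.
Import Order.TTheory GRing.Theory Num.Theory.
Local Open Scope ring_scope.

Section Vec.
Context {R : realType}.
Implicit Types a b z u w n : 'rV[R]_3.
Definition cross a b : 'rV[R]_3 := \row_(j < 3)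
  (if j == 0 :> nat then a 0 1 * b 0 2 - a 0 2 * b 0 1
   else if j == 1 :> nat then a 0 2 * b 0 0 - a 0 0 * b 0 2
   else a 0 0 * b 0 1 - a 0 1 * b 0 0).
Lemma cross0 a b : cross a b 0 0 = a 0 1 * b 0 2 - a 0 2 * b 0 1.
Proof. by rewrite mxE. Qed.
Lemma cross1 a b : cross a b 0 1 = a 0 2 * b 0 0 - a 0 0 * b 0 2.
Proof. by rewrite mxE. Qed.
Lemma cross2 a b : cross a b 0 2 = a 0 0 * b 0 1 - a 0 1 * b 0 0.
Proof. by rewrite mxE. Qed.
Lemma dot3 u w : dot u w = u 0 0 * w 0 0 + u 0 1 * w 0 1 + u 0 2 * w 0 2.
Proof.
rewrite /dot !big_ord_recr big_ord0 /= add0r.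
by congr (_ * _ + _ * _ + _ * _); congr (_ _ _); apply/val_inj.
Qed.
Lemma rv3P u w : u 0 0 = w 0 0 -> u 0 1 = w 0 1 -> u 0 2 = w 0 2 -> u = w.
Proof.
move=> h0 h1 h2; apply/rowP => j.
case: j => [[|[|[|k]]] hk] //.
- by rewrite (_ : Ordinal hk = 0) //; apply/val_inj.
- by rewrite (_ : Ordinal hk = 1) //; apply/val_inj.
- by rewrite (_ : Ordinal hk = 2) //; apply/val_inj.
Qed.

Ltac dott := rewrite ?dot3 ?cross0 ?cross1 ?cross2 ?mxE /=; ring.

Lemma dotC u w : dot u w = dot w u. Proof. dott. Qed.
Lemma dotDl u v w : dot (u + v) w = dot u w + dot v w. Proof. dott. Qed.
Lemma dotDr u v w : dot w (u + v) = dot w u + dot w v. Proof. dott. Qed.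
Lemma dotBl u v w : dot (u - v) w = dot u w - dot v w. Proof. dott. Qed.
Lemma dotBr u v w : dot w (u - v) = dot w u - dot w v. Proof. dott. Qed.
Lemma dotNl u w : dot (- u) w = - dot u w. Proof. dott. Qed.
Lemma dotNr u w : dot w (- u) = - dot w u. Proof. dott. Qed.
Lemma dotZl k u w : dot (k *: u) w = k * dot u w. Proof. dott. Qed.
Lemma dotZr k u w : dot w (k *: u) = k * dot w u. Proof. dott. Qed.
Lemma dot0l w : dot 0 w = 0. Proof. dott. Qed.
Lemma dot0r w : dot w 0 = 0. Proof. dott. Qed.
Lemma dot_crossl a b : dot a (cross a b) = 0. Proof. dott. Qed.
Lemma dot_crossr a b : dot b (cross a b) = 0. Proof. dott. Qed.
Lemma triple_cyc1 a b c : dot b (cross c a) = dot a (cross b c). Proof. dott. Qed.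
Lemma triple_cyc2 a b c : dot c (cross a b) = dot a (cross b c). Proof. dott. Qed.
Lemma recip a b z : let c := cross a b in
  (dot c c) *: z = ((dot z a)*(dot b b) - (dot z b)*(dot a b)) *: a
    + ((dot z b)*(dot a a) - (dot z a)*(dot a b)) *: b + (dot z c) *: c.
Proof. rewrite /=; apply: rv3P; rewrite !dot3 !mxE /= ?cross0 ?cross1 ?cross2; ring. Qed.
Lemma par_id n a : (dot n n) *: a = (dot a n) *: n + cross (cross n a) n.
Proof. apply: rv3P; rewrite !dot3 !mxE /= ?cross0 ?cross1 ?cross2; ring. Qed.
Lemma dot_self_ge0 u : 0 <= dot u u.
Proof. rewrite dot3; nra. Qed.
Lemma dot_self_eq0 u : dot u u = 0 -> u = 0.
Proof. rewrite dot3 => h; apply: rv3P; rewrite mxE; nra. Qed.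
Lemma dot_self_gt0 u : u != 0 -> 0 < dot u u.
Proof.
move=> hu; rewrite lt_neqAle dot_self_ge0 andbT eq_sym.
by apply/negP => /eqP /dot_self_eq0 /eqP; apply/negP.
Qed.
Lemma par n a : n != 0 -> cross n a = 0 -> a = (dot a n / dot n n) *: n.
Proof.
move=> hn h; have := par_id n a; rewrite h.
have k0 : dot n n != 0 by rewrite gt_eqF // dot_self_gt0.
rewrite (_ : cross 0 n = 0); last by apply: rv3P; rewrite !mxE /=; ring.
rewrite addr0 => e.
by rewrite mulrC -scalerA -e scalerA mulVf // scale1r.
Qed.
Lemma indep n a z : cross n a != 0 -> dot z n = 0 -> dot z a = 0 ->
  dot z (cross n a) = 0 -> z = 0.
Proof.
move=> hc h1 h2 h3; have := recip n a z; rewrite /= h1 h2 h3.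
rewrite !(mul0r, mulr0, subr0, scale0r, addr0) => /eqP.
by rewrite scaler_eq0 (gt_eqF (dot_self_gt0 _ hc)) /= => /eqP.
Qed.
Lemma mulT u w : u *m w^T = (dot u w)%:M.
Proof.
apply/matrixP => i j; rewrite !mxE !ord1 eqxx mulr1n /dot.
by apply: eq_bigr => k _; rewrite !mxE.
Qed.
Lemma dotE u w : dot u w = (u *m w^T) 0 0.
Proof. by rewrite mulT mxE eqxx mulr1n. Qed.
Lemma rank2 a b : cross a b != 0 -> \rank (col_mx a b) = 2%N.
Proof.
move=> hc; set c := cross a b.
apply/eqP; rewrite eqn_leq rank_leq_row /=.
have e : col_mx a b *m row_mx (cross b c)^T (cross c a)^T = (dot c c)%:M.
  rewrite mul_col_mx !mul_mx_row !mulT scalar_mx_block.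
  rewrite (triple_cyc2 b c a) -/c dot_crossl.
  rewrite (triple_cyc1 b c a) -/c dot_crossr.
  by rewrite /block_mx; congr (col_mx (row_mx _ _) (row_mx _ _));
    apply/matrixP=> i j; rewrite !mxE mul0rn.
have := mxrankM_maxl (col_mx a b) (row_mx (cross b c)^T (cross c a)^T).
rewrite e mxrank_unit //.
rewrite unitmxE det_scalar unitfE expf_neq0 // gt_eqF // dot_self_gt0 //.
Qed.
End Vec.

Set Implicit Arguments. Unset Strict Implicit.


Section Gen.
Context {R : realType}.

Lemma exists_maxP (T : finType) (P : T -> Prop) (f : T -> R) x0 :
  P x0 -> exists m, P m /\ forall y, P y -> f y <= f m.
Proof.
move=> hx0.
suff : forall s : seq T, (exists2 x, x \in s & P x) ->
  exists m, P m /\ forall y, y \in s -> P y -> f y <= f m.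
  case/(_ (enum T)); first by exists x0; rewrite ?mem_enum.
  by move=> m [hm h]; exists m; split=> // y; apply: h; rewrite mem_enum.
elim=> [|a s IH] [x]; first by [].
rewrite inE => hx Px.
have [Pa|nPa] := classic (P a).
  have [hs|hs] := classic (exists2 x, x \in s & P x).
    have [m [Pm hm]] := IH hs.
    have [le|lt] := leP (f a) (f m).
      exists m; split=> // y; rewrite inE => /orP [/eqP ->|ys] // Py.
      exact: hm.
    exists a; split=> // y; rewrite inE => /orP [/eqP ->|ys] Py //.
    by apply: le_trans (hm y ys Py) (ltW lt).
  exists a; split=> // y; rewrite inE => /orP [/eqP ->|ys] Py //.
  by exfalso; apply: hs; exists y.
have hs : exists2 x, x \in s & P x.
  exists x => //; case/orP: hx => // /eqP ex; by rewrite ex in Px.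
have [m [Pm hm]] := IH hs.
exists m; split=> // y; rewrite inE => /orP [/eqP ey|ys] Py.
  by rewrite ey in Py.
exact: hm.
Qed.

Lemma exists_eps (T : finType) (P : T -> Prop) (e : T -> R) :
  (forall x, P x -> 0 < e x) -> exists eps, 0 < eps /\ forall x, P x -> eps <= e x.
Proof.
move=> he.
suff : forall s : seq T, exists eps, 0 < eps /\ forall x, x \in s -> P x -> eps <= e x.
  case/(_ (enum T)) => eps [h0 h]; exists eps; split=> // x; apply: h.
  by rewrite mem_enum.
elim=> [|a s [eps [h0 h]]]; first by exists 1.
have [Pa|nPa] := classic (P a).
  exists (Num.min eps (e a)); split; first by rewrite lt_min h0 he.
  move=> x; rewrite inE => /orP [/eqP ->|xs] Px; rewrite ge_min ?lexx ?orbT //.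
  by rewrite h.
exists eps; split=> // x; rewrite inE => /orP [/eqP ex|xs] Px; last exact: h.
by rewrite ex in Px.
Qed.
End Gen.

Section Poly.
Context {R : realType} {V : finType}.
Implicit Types p : V -> 'rV[R]_3.

Definition allexp p := forall v, exposed p [set v].

Lemma vexp p v : exposed p [set v] -> exists n c, n != 0 /\
  (forall x, dot n (p x) <= c) /\ (forall x, (dot n (p x) == c) = (x == v)).
Proof.
case=> n [c [hn [hle he]]]; exists n, c; do 2!split => //.
by move=> x; rewrite he in_set1.
Qed.

Lemma vert_inj p : allexp p -> injective p.
Proof.
move=> hv x y hxy; have [n [c [_ [_ he]]]] := vexp (hv x).
have := he y; rewrite -hxy.
by have := he x; rewrite eqxx => -> /esym/eqP.
Qed.

Lemma nobetween p w y z mu : allexp p -> 0 < mu < 1 -> y != w -> y != z ->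
  p y = (1 - mu) *: p w + mu *: p z -> False.
Proof.
move=> hv /andP [m0 m1] hyw hyz e.
have [n [c [_ [hle he]]]] := vexp (hv y).
have hy : dot n (p y) = c by apply/eqP; rewrite he.
have hw : dot n (p w) < c by rewrite lt_neqAle hle he eq_sym hyw.
have hz : dot n (p z) < c by rewrite lt_neqAle hle he eq_sym hyz.
move: hy; rewrite e dotDr !dotZr; nra.
Qed.

Lemma lin1 (X W U : 'rV[R]_3) lam : X - W = lam *: (U - W) ->
  X = (1 - lam) *: W + lam *: U.
Proof.
move=> h; have -> : X = W + lam *: (U - W) by rewrite -h addrC subrK.
by apply: rv3P; rewrite !mxE; ring.
Qed.

Lemma colin p w x u lam : allexp p -> x != w -> u != w -> 0 < lam ->
  p x - p w = lam *: (p u - p w) -> x = u.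
Proof.
move=> hv hxw huw hl h.
have [exu|hxu] := eqVneq x u => //; exfalso.
case: (ltrgtP lam 1) => hl1.
- apply: (nobetween (mu := lam) hv _ hxw hxu); first by rewrite hl hl1.
  exact: lin1.
- apply: (nobetween (y := u) (z := x) (mu := lam^-1) hv _ huw); last first.
    apply: lin1; rewrite h scalerA mulVf ?scale1r //; by rewrite gt_eqF.
  + by rewrite eq_sym.
  + by rewrite invr_gt0 hl /= invf_lt1.
- move: h; rewrite hl1 scale1r => /eqP; rewrite subr_eq subrK => /eqP.
  by move/(vert_inj hv); apply/eqP.
Qed.
End Poly.


Section Vert.
Context {R : realType} {V : finType}.
Implicit Types p : V -> 'rV[R]_3.

Definition vx p w n c := n != 0 /\
  (forall x, dot n (p x) <= c) /\ (forall x, (dot n (p x) == c) = (x == w)).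

Definition sv p n c x := c - dot n (p x).
Definition A p w n c a x := dot a (p x - p w) / sv p n c x.

Lemma vx_ex p w : exposed p [set w] -> exists n c, vx p w n c.
Proof. by move/vexp. Qed.

Lemma s_pos p w n c x : vx p w n c -> x != w -> 0 < sv p n c x.
Proof.
move=> [_ [hle he]] hxw; rewrite /sv subr_gt0 lt_neqAle hle he hxw //.
Qed.

Lemma dn p w n c x : vx p w n c -> dot n (p x - p w) = - sv p n c x.
Proof.
move=> [_ [hle he]]; have /eqP hw : dot n (p w) == c by rewrite he.
by rewrite dotBr hw /sv opprB.
Qed.

Lemma dA p w n c a x : vx p w n c -> x != w ->
  dot a (p x - p w) = A p w n c a x * sv p n c x.
Proof. by move=> h hx; rewrite /A divfK // gt_eqF // (s_pos h hx). Qed.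

Lemma edge_lex p w n c a b x0 y1 y2 : allexp p ->
  vx p w n c -> x0 != w -> y1 != w -> y2 != w -> y1 != y2 ->
  (forall z, dot z n = 0 -> dot z a = 0 -> dot z b = 0 -> z = 0) ->
  exists u, [/\ u != w, is_edge p [set w; u] &
    forall x, x != w -> x != u -> A p w n c a x < A p w n c a u \/
        (A p w n c a x = A p w n c a u /\ A p w n c b x < A p w n c b u)].
Proof.
move=> hv hx hx0 hy1 hy2 hy12 hind.
have [m [hmw hm]] := exists_maxP (P := fun x => x != w) (A p w n c a) hx0.
have [u [[huw hum] hu]] := exists_maxP (P := fun x => x != w /\ A p w n c a x = A p w n c a m)
   (A p w n c b) (conj hmw erefl).
have hlex : forall x, x != w -> x != u -> A p w n c a x < A p w n c a u \/
        (A p w n c a x = A p w n c a u /\ A p w n c b x < A p w n c b u).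
  move=> x hxw hxu; rewrite hum.
  have := hm x hxw; rewrite le_eqVlt => /orP [/eqP e|]; last by left.
  right; split => //.
  have := hu x (conj hxw e); rewrite le_eqVlt => /orP [/eqP e2|] //.
  exfalso; move/negP: hxu; apply; apply/eqP.
  have sx := s_pos hx hxw; have su := s_pos hx huw.
  pose z := sv p n c u *: (p x - p w) - sv p n c x *: (p u - p w).
  have z0 : z = 0.
    apply: hind.
    - by rewrite /z dotBl !dotZl (dotC _ n) (dotC _ n) !(dn _ hx); ring.
    - rewrite /z dotBl !dotZl (dotC _ a) (dotC _ a) (dA _ hx hxw) (dA _ hx huw).
      by rewrite e hum; ring.
    - rewrite /z dotBl !dotZl (dotC _ b) (dotC _ b) (dA _ hx hxw) (dA _ hx huw).
      by rewrite e2; ring.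
  move: z0 => /eqP; rewrite /z subr_eq0 => /eqP h.
  apply: (colin (lam := sv p n c x / sv p n c u) hv hxw huw); first by rewrite divr_gt0.
  by rewrite mulrC -scalerA -h scalerA mulVf ?scale1r // gt_eqF.
exists u; split => //; last first.
set K := A p w n c a u; set Kb := A p w n c b u.
pose e x := if A p w n c a x < K then (K - A p w n c a x) / (`|A p w n c b x - Kb| + 1) else 1.
have [eps [he0 heps]] : exists eps, 0 < eps /\ forall x, x != w /\ x != u -> eps <= e x.
  apply: exists_eps => x _; rewrite /e; case: ifP => // hlt.
  by rewrite divr_gt0 // ?subr_gt0 // ltr_pwDr.
set K' := K + eps * Kb.
pose g := a + eps *: b + K' *: n.
have hg : forall v, v != w -> dot g (p v - p w) =
    sv p n c v * (A p w n c a v + eps * A p w n c b v - K').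
  move=> v hvw; rewrite /g !dotDl !dotZl (dA a hx hvw) (dA b hx hvw) (dn _ hx).
  ring.
have hG : forall x, x != w -> x != u -> A p w n c a x + eps * A p w n c b x < K'.
  move=> x hxw hxu; rewrite /K'; case: (hlex x hxw hxu) => [hlt|[heq hlt]].
    have h3 : 0 <= `|A p w n c b x - Kb| by [].
    have hpos : 0 < `|A p w n c b x - Kb| + 1 by lra.
    have := heps x (conj hxw hxu); rewrite /e -/K hlt ler_pdivlMr // => h1.
    have h2 := ler_norm (A p w n c b x - Kb).
    nra.
  by rewrite heq ltrD2l ltr_pM2l.

have hneg : forall x, x != w -> x != u -> dot g (p x - p w) < 0.
  move=> x hxw hxu; rewrite hg //; have := s_pos hx hxw; have := hG x hxw hxu; nra.
have hu0 : dot g (p u - p w) = 0.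
  by rewrite hg // /K' /K /Kb; ring.
have [y [hyw hyu]] : exists y, y != w /\ y != u.
  case: (eqVneq y1 u) => [e1|]; last by exists y1.
  by exists y2; split => //; rewrite -e1 eq_sym.
split; last by rewrite cards2 eq_sym huw.
exists g, (dot g (p w)); split; [|split].
- apply/eqP => g0; have := hneg y hyw hyu; by rewrite g0 dot0l ltxx.
- move=> v; case: (eqVneq v w) => [->|hvw]; first by [].
  rewrite -subr_le0 -dotBr; case: (eqVneq v u) => [->|hvu]; first by rewrite hu0.
  exact: ltW (hneg v hvw hvu).
- move=> v; rewrite in_set2 -subr_eq0 -dotBr.
  case: (eqVneq v w) => [->|hvw]; first by rewrite subrr dot0r eqxx.
  case: (eqVneq v u) => [->|hvu]; first by rewrite hu0 eqxx.
  by rewrite lt_eqF // hneg.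
Qed.
End Vert.


Section Simple.
Context {R : realType} {V : finType}.
Implicit Types p : V -> 'rV[R]_3.

Definition nb p w u := is_edge p [set w; u].

Lemma nb_neq p w u : nb p w u -> u != w.
Proof. by case=> _; rewrite cards2 eq_sym; case: (u != w) => // /eqP. Qed.

Lemma nb_sym p w u : nb p w u -> nb p u w.
Proof. by rewrite /nb setUC. Qed.

Lemma edge2 p e w : is_edge p e -> w \in e -> exists u, u != w /\ e = [set w; u].
Proof.
case=> _ /eqP /cards2P [x [y [hxy ->]]]; rewrite in_set2 => /orP [/eqP ->|/eqP ->].
  by exists y; rewrite eq_sym.
by exists x; split => //; rewrite setUC.
Qed.

Lemma set2_inj (w u u' : V) : u != w -> [set w; u] = [set w; u'] -> u = u'.
Proof.
move=> huw e; have : u \in [set w; u'] by rewrite -e set22.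
by rewrite in_set2 (negbTE huw) => /eqP.
Qed.

Lemma SV p w : simple_polyhedron p -> exists u1 u2 u3,
  [/\ u1 != w, u2 != w & u3 != w] /\ [/\ u1 != u2, u1 != u3 & u2 != u3] /\
  [/\ nb p w u1, nb p w u2 & nb p w u3] /\
  forall u, nb p w u -> u = u1 \/ u = u2 \/ u = u3.
Proof.
case=> _ /(_ w) [e1 [e2 [e3 [[h1 h2 h3] [[i1 i2 i3] [[d12 d13 d23] hall]]]]]].
have [u1 [n1 E1]] := edge2 h1 i1; have [u2 [n2 E2]] := edge2 h2 i2.
have [u3 [n3 E3]] := edge2 h3 i3.
exists u1, u2, u3; split => //; split.
  split; apply/eqP => e.
  - by apply: d12; rewrite E1 E2 e.
  - by apply: d13; rewrite E1 E3 e.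
  - by apply: d23; rewrite E2 E3 e.
split; first by rewrite /nb -E1 -E2 -E3.
move=> u hu; have := hall _ hu (set21 _ _); rewrite E1 E2 E3.
have hnu := nb_neq hu.
by case=> [/(set2_inj hnu)|[/(set2_inj hnu)|/(set2_inj hnu)]]; auto.
Qed.

Lemma pigeon3 (T : eqType) (u1 u2 u3 a b v v' : T) :
  (a = u1 \/ a = u2 \/ a = u3) -> (b = u1 \/ b = u2 \/ b = u3) ->
  (v = u1 \/ v = u2 \/ v = u3) -> (v' = u1 \/ v' = u2 \/ v' = u3) ->
  a != b -> v != a -> v != b -> v' != a -> v' != b -> v = v'.
Proof.
by move=> [->|[->|->]] [->|[->|->]] [->|[->|->]] [->|[->|->]]; rewrite ?eqxx.
Qed.

Lemma NP2 p w n c x y : allexp p -> vx p w n c -> x != w -> y != w -> x != y ->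
  cross (p x - p w) (p y - p w) != 0.
Proof.
move=> hv hx hxw hyw hxy; apply/eqP => h0.
have dx0 : p x - p w != 0.
  by rewrite subr_eq0; apply/negP => /eqP /(vert_inj hv) /eqP; apply/negP.
have e := par _ _ dx0 h0; set lam := _ / _ in e.
have sx := s_pos hx hxw; have sy := s_pos hx hyw.
have := congr1 (dot n) e; rewrite dotZr !(dn _ hx) => hl.
have hlam : 0 < lam by nra.
by move/negP: hxy; apply; apply/eqP; apply: esym; apply: (colin hv hyw hxw hlam e).
Qed.

Lemma ncross p w n c y a : vx p w n c -> y != w -> dot a (p y - p w) = 0 -> a != 0 ->
  cross n a != 0.
Proof.
move=> hx hyw hd ha; apply/eqP => h0.
have [hn _] := hx.
have e := par _ _ hn h0; set lam := _ / _ in e.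
have sy := s_pos hx hyw.
move: hd; rewrite e dotZl (dn _ hx) => hl.
have l0 : lam = 0 by nra.
by move/negP: ha; apply; rewrite e l0 scale0r.
Qed.

Lemma up p w n c a x : simple_polyhedron p -> vx p w n c ->
  0 < dot a (p x - p w) -> exists u, nb p w u /\ 0 < dot a (p u - p w).
Proof.
move=> hs hx hpos.
have hv : allexp p by case: hs => -[].
have [u1 [u2 [u3 [[n1 n2 n3] [[d12 d13 d23] [[b1 b2 b3] hall]]]]]] := SV w hs.
have hxw : x != w by apply/eqP => e; move: hpos; rewrite e subrr dot0r ltxx.
have [hn _] := hx.
have [hc|hc] := eqVneq (cross n a) 0.
  have e := par _ _ hn hc; set lam := _ / _ in e.
  have sx := s_pos hx hxw; have s1 := s_pos hx n1.
  move: hpos; rewrite e dotZl (dn _ hx) => hl.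
  exists u1; split => //; rewrite dotZl (dn _ hx); nra.
have hind : forall z, dot z n = 0 -> dot z a = 0 -> dot z (cross n a) = 0 -> z = 0.
  by move=> z; apply: indep.
have [u [huw hu hlex]] := edge_lex hv hx hxw n1 n2 d12 hind.
exists u; split => //.
have sx := s_pos hx hxw; have su := s_pos hx huw.
have Ax : 0 < A p w n c a x by rewrite /A divr_gt0.
rewrite (dA a hx huw); apply: mulr_gt0 => //.
case: (eqVneq x u) => [<- //|hxu].
by case: (hlex x hxw hxu) => [h|[h _]]; [apply: lt_trans Ax h| rewrite -h].
Qed.
End Simple.


Section Faces.
Context {R : realType} {V : finType}.
Implicit Types p : V -> 'rV[R]_3.

Lemma triple_nz p w n c u1 u2 u3 : simple_polyhedron p -> vx p w n c ->
  [/\ u1 != w, u2 != w & u3 != w] -> [/\ u1 != u2, u1 != u3 & u2 != u3] ->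
  (forall u, nb p w u -> u = u1 \/ u = u2 \/ u = u3) ->
  dot (p u1 - p w) (cross (p u2 - p w) (p u3 - p w)) != 0.
Proof.
move=> hs hx [n1 n2 n3] [d12 d13 d23] hall.
have hv : allexp p by case: hs => -[].
have hfd : full_dimensional p by case: hs => -[].
set m := cross (p u2 - p w) (p u3 - p w).
have hm : m != 0 := NP2 hv hx n2 n3 d23.
apply/eqP => ht.
have [v hv'] := hfd m (dot m (p w)) hm.
have hdv : dot m (p v - p w) != 0 by rewrite dotBr subr_eq0.
pose a := if 0 < dot m (p v - p w) then m else - m.
have ha : 0 < dot a (p v - p w).
  rewrite /a; case: ifP => h //; rewrite dotNl oppr_gt0 lt_neqAle hdv /=.
  by rewrite leNgt h.
have hz0 : forall u, nb p w u -> dot m (p u - p w) = 0.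
  by move=> u /hall [->|[->|->]]; rewrite dotC ?dot_crossl ?dot_crossr.
have [u [hu hpos]] := up hs hx ha.
move: hpos; rewrite /a; case: ifP => _; rewrite ?dotNl hz0 ?oppr0 ?ltxx //.
Qed.

Lemma pair_face p w ua ub : simple_polyhedron p -> nb p w ua -> nb p w ub -> ua != ub ->
  exists G, [/\ is_face p G, w \in G, ua \in G & ub \in G].
Proof.
move=> hs ha hb hab.
have hv : allexp p by case: hs => -[].
have [n [c hx]] := vx_ex (hv w).
have [u1 [u2 [u3 [[n1 n2 n3] [[d12 d13 d23] [[b1 b2 b3] hall]]]]]] := SV w hs.
have naw := nb_neq ha; have nbw := nb_neq hb.
set m := cross (p ua - p w) (p ub - p w).
have hm : m != 0 := NP2 hv hx naw nbw hab.
have hma : dot m (p ua - p w) = 0 by rewrite dotC dot_crossl.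
have hmb : dot m (p ub - p w) = 0 by rewrite dotC dot_crossr.
have [m' [hm'0 [hma' [hmb' hnbs]]]] : exists m', m' != 0 /\ dot m' (p ua - p w) = 0 /\
    dot m' (p ub - p w) = 0 /\ forall v, nb p w v -> dot m' (p v - p w) <= 0.
  case: (classic (forall v, nb p w v -> dot m (p v - p w) <= 0)) => H.
    by exists m.
  have [v0 [hv0 hpos0]] : exists v0, nb p w v0 /\ 0 < dot m (p v0 - p w).
    apply: NNPP => H'; apply: H => v hv0; rewrite leNgt; apply/negP => hlt.
    by apply: H'; exists v.
  exists (- m); rewrite oppr_eq0 hm !dotNl hma hmb oppr0; do 3!split => //.
  move=> v hvn; rewrite dotNl oppr_le0.
  case: (eqVneq v ua) => [->|hva]; first by rewrite hma.
  case: (eqVneq v ub) => [->|hvb]; first by rewrite hmb.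
  have h0a : v0 != ua by apply/eqP => e; move: hpos0; rewrite e hma ltxx.
  have h0b : v0 != ub by apply/eqP => e; move: hpos0; rewrite e hmb ltxx.
  rewrite (pigeon3 (hall _ ha) (hall _ hb) (hall _ hvn) (hall _ hv0) hab hva hvb h0a h0b).
  exact: ltW.
have hall' : forall x, dot m' (p x - p w) <= 0.
  move=> x; rewrite leNgt; apply/negP => hpos.
  have [u [hu hpu]] := up hs hx hpos.
  by have := hnbs u hu; rewrite leNgt hpu.
exists [set x | dot m' (p x) == dot m' (p w)].
split; rewrite ?inE ?eqxx //; last 2 first.
- by rewrite -subr_eq0 -dotBr hma'.
- by rewrite -subr_eq0 -dotBr hmb'.
split.
  exists m', (dot m' (p w)); split => //; split.
    by move=> v; have := hall' v; rewrite dotBr subr_le0.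
  by move=> v; rewrite inE.
exists w, ua, ub; split; rewrite ?inE ?eqxx //.
- by rewrite -subr_eq0 -dotBr hma'.
- by rewrite -subr_eq0 -dotBr hmb'.
- exact: rank2.
Qed.

Lemma rank_dist p (u v w' : V) : \rank (col_mx (p v - p u) (p w' - p u)) = 2%N ->
  [/\ u != v, u != w' & v != w'].
Proof.
move=> hr; split; apply/eqP => e; move: hr; rewrite ?e ?subrr.
- rewrite (_ : col_mx 0 _ = col_mx 0 1%:M *m (p w' - p v)); last first.
    by rewrite mul_col_mx mul0mx mul1mx.
  move=> h; suff: (2 <= 1)%N by [].
  by rewrite -{1}h; apply: leq_trans (mxrankM_maxr _ _) (rank_leq_row _).
- rewrite (_ : col_mx _ 0 = col_mx 1%:M 0 *m (p v - p w')); last first.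
    by rewrite mul_col_mx mul0mx mul1mx.
  move=> h; suff: (2 <= 1)%N by [].
  by rewrite -{1}h; apply: leq_trans (mxrankM_maxr _ _) (rank_leq_row _).
- rewrite (_ : col_mx _ _ = col_mx 1%:M 1%:M *m (p w' - p u)); last first.
    by rewrite mul_col_mx mul1mx.
  move=> h; suff: (2 <= 1)%N by [].
  by rewrite -{1}h; apply: leq_trans (mxrankM_maxr _ _) (rank_leq_row _).
Qed.
End Faces.


Section Faces2.
Context {R : realType} {V : finType}.
Implicit Types p : V -> 'rV[R]_3.

Lemma A_opp p w n c b x : A p w n c (- b) x = - A p w n c b x.
Proof. by rewrite /A dotNl mulNr. Qed.

Lemma face_nbrs p w G : simple_polyhedron p -> is_face p G -> w \in G ->
  exists a b, [/\ a != b, nb p w a, nb p w b, a \in G & b \in G].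
Proof.
move=> hs [[nG [cG [hnG [hle he]]]] [x1 [x2 [x3 [i1 i2 i3 hr]]]]] hwG.
have hv : allexp p by case: hs => -[].
have [n [c hx]] := vx_ex (hv w).
have [u1 [u2 [u3 [[n1 n2 n3] [[d12 d13 d23] [[b1 b2 b3] hall]]]]]] := SV w hs.
have [e12 e13 e23] := rank_dist hr.
have [x [y [hxy [hxw [hyw [hxG hyG]]]]]] : exists x y, x != y /\ x != w /\ y != w /\
    x \in G /\ y \in G.
  case: (eqVneq x1 w) => [e1|h1].
    exists x2, x3; do !split => //; by rewrite -e1 eq_sym.
  case: (eqVneq x2 w) => [e2|h2].
    by exists x1, x3; do !split => //; rewrite -e2 eq_sym.
  by exists x1, x2.
have hcw : dot nG (p w) = cG by apply/eqP; rewrite he.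
have hG0 : forall z, z \in G -> dot nG (p z - p w) = 0.
  move=> z hz; have /eqP e : dot nG (p z) == cG by rewrite he.
  by rewrite dotBr hcw e subrr.
have hGle : forall z, dot nG (p z - p w) <= 0 by move=> z; rewrite dotBr hcw subr_le0.
have hc : cross n nG != 0 := ncross hx hxw (hG0 x hxG) hnG.
have hind : forall z, dot z n = 0 -> dot z nG = 0 -> dot z (cross n nG) = 0 -> z = 0.
  by move=> z; apply: indep.
have hind' : forall z, dot z n = 0 -> dot z nG = 0 -> dot z (- cross n nG) = 0 -> z = 0.
  by move=> z h1 h2; rewrite dotNr => /eqP; rewrite oppr_eq0 => /eqP; apply: hind.
have key : forall b u, u != w -> (forall x', x' != w -> x' != u ->
    A p w n c nG x' < A p w n c nG u \/
    (A p w n c nG x' = A p w n c nG u /\ A p w n c b x' < A p w n c b u)) ->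
    u \in G /\ A p w n c nG u = 0.
  move=> b u huw hlex.
  have su := s_pos hx huw.
  have hA0 : forall z, z \in G -> A p w n c nG z = 0 by move=> z hz; rewrite /A hG0 ?mul0r.
  have hAu : 0 <= A p w n c nG u.
    case: (eqVneq x u) => [<-|hxu]; first by rewrite hA0.
    by case: (hlex x hxw hxu) => [h|[h _]]; rewrite -(hA0 x hxG) ?h // ltW.
  have hd : dot nG (p u - p w) = 0.
    have := hGle u; rewrite (dA nG hx huw) => h; apply/eqP; rewrite eq_le h /=.
    by rewrite mulr_ge0 // ltW.
  split; last by rewrite /A hd mul0r.
  by rewrite -he; move: hd; rewrite dotBr hcw => /eqP; rewrite subr_eq0.
have [up [hupw hup hlexp]] := edge_lex hv hx hxw n1 n2 d12 hind.
have [um [humw hum hlexm]] := edge_lex hv hx hxw n1 n2 d12 hind'.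
have [upG Aup] := key _ _ hupw hlexp.
have [umG Aum] := key _ _ humw hlexm.
exists up, um; split => //.
apply/eqP => e; rewrite -e in hlexm.
have [z [hzw [hzu hzG]]] : exists z, z != w /\ z != up /\ z \in G.
  case: (eqVneq x up) => [ex|]; last by exists x.
  by exists y; do !split => //; rewrite -ex eq_sym.
have Az : A p w n c nG z = 0 by rewrite /A hG0 ?mul0r.
case: (hlexp z hzw hzu) => [|[_ h1]]; first by rewrite Az Aup ltxx.
case: (hlexm z hzw hzu) => [|[_ h2]]; first by rewrite Az Aup ltxx.
by move: h2; rewrite !A_opp ltrN2 => h2; move: (lt_trans h1 h2); rewrite ltxx.
Qed.

Lemma sub_cancel (M : zmodType) (x1 x2 t : M) : (x1 + t) - (x2 + t) = x1 - x2.
Proof. by rewrite opprD addrACA subrr addr0. Qed.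

Lemma face_agree (V' : finType) p (p' : V' -> 'rV[R]_3) (fV : V -> V') (L : 'M[R]_3) tt G w a b :
  allexp p -> is_face p G -> face_affine_equiv p p' fV G ->
  w \in G -> a \in G -> b \in G -> a != b -> a != w -> b != w ->
  p w *m L + tt = p' (fV w) -> p a *m L + tt = p' (fV a) -> p b *m L + tt = p' (fV b) ->
  forall x, x \in G -> p x *m L + tt = p' (fV x).
Proof.
move=> hv [[nG [cG [hnG [hle he]]]] _] [M [bG [_ hM]]] hwG haG hbG hab haw hbw
  agw aga agb x hxG.
have [n [c hx]] := vx_ex (hv w).
set da := p a - p w; set db := p b - p w; set cc := cross da db.
have hcc : cc != 0 := NP2 hv hx haw hbw hab.
have k0 : dot cc cc != 0 by rewrite gt_eqF // dot_self_gt0.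
have hcw : dot nG (p w) = cG by apply/eqP; rewrite he.
have hG0 : forall z, z \in G -> dot nG (p z - p w) = 0.
  move=> z hz; have /eqP e : dot nG (p z) == cG by rewrite he.
  by rewrite dotBr hcw e subrr.
have hna := hG0 a haG; have hnb := hG0 b hbG.
have enG := recip da db nG; rewrite /= -/cc hna hnb !(mul0r, subr0, sub0r, oppr0, scale0r, add0r, addr0) in enG.
set z := p x - p w.
have hzn : dot z nG = 0 by rewrite dotC hG0.
have hnc : dot nG cc != 0.
  apply/eqP => h; move: enG; rewrite h scale0r => /eqP; rewrite scaler_eq0 (negbTE k0) /=.
  by move/negbTE: hnG => ->.
have hzc : dot z cc = 0.
  have := congr1 (dot z) enG; rewrite !dotZr hzn mulr0 => /esym /eqP.
  by rewrite mulf_eq0 (negbTE hnc) /= => /eqP.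
have ez := recip da db z; rewrite /= -/cc hzc scale0r addr0 in ez.
have hda : da *m L = da *m M.
  by rewrite /da !mulmxBl -(sub_cancel (p a *m L) _ tt) aga agw -(hM a haG) -(hM w hwG) sub_cancel.
have hdb : db *m L = db *m M.
  by rewrite /db !mulmxBl -(sub_cancel (p b *m L) _ tt) agb agw -(hM b hbG) -(hM w hwG) sub_cancel.
have hz : z *m L = z *m M.
  have : dot cc cc *: (z *m L) = dot cc cc *: (z *m M).
    by rewrite !scalemxAl ez !mulmxDl -!scalemxAl hda hdb.
  by move/(congr1 (fun X => (dot cc cc)^-1 *: X)); rewrite !scalerK.
have -> : p x = z + p w by rewrite /z subrK.
rewrite mulmxDl -addrA agw -(hM w hwG) addrA hz -mulmxDl.
by rewrite /z subrK hM.
Qed.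
End Faces2.


Lemma zm1 (M : zmodType) (a b c : M) : (a - b + c) + (b - c) = a.
Proof. by rewrite addrACA subrK subrr addr0. Qed.

Lemma Lform (R : realType) (z c1 c2 c3 e1 e2 e3 : 'rV[R]_3) (t : R) :
  z *m (t *: (c1^T *m e1 + c2^T *m e2 + c3^T *m e3)) =
  t *: (dot z c1 *: e1 + dot z c2 *: e2 + dot z c3 *: e3).
Proof. by rewrite -scalemxAr !mulmxDr !mulmxA !mulT !mul_scalar_mx. Qed.

Unset Implicit Arguments.

Theorem theorem4 (R : realType) (V V' : finType)
  (p : V -> 'rV[R]_3) (p' : V' -> 'rV[R]_3)
  (fV : V -> V') (fE fF : {set V} -> {set V'}) :
  simple_polyhedron p -> simple_polyhedron p' ->
  comb_equiv p p' fV fE fF ->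
  (forall F : {set V}, is_face p F -> face_affine_equiv p p' fV F) ->
  affine_equiv p p' fV.
Proof.
move=> hs hs' [hbij _ _ _ _] hF.
have hv : allexp p by case: hs => -[].
have hfd : full_dimensional p by case: hs => -[].
have hfd' : full_dimensional p' by case: hs' => -[].
have [w0 _] : exists w0 : V, True.
  have one0 : (\row_(j < 3) (1 : R)) != 0.
    apply/eqP => h; have := congr1 (fun M : 'rV[R]_3 => M 0 0) h; rewrite !mxE => /eqP.
    by rewrite oner_eq0.
  by have [v _] := hfd _ 0 one0; exists v.
have [n [c hx]] := vx_ex (hv w0).
have [u1 [u2 [u3 [hn [hd [[b1 b2 b3] hall]]]]]] := SV w0 hs.
have ht := triple_nz hs hx hn hd hall.
set d1 := p u1 - p w0 in ht; set d2 := p u2 - p w0 in ht; set d3 := p u3 - p w0 in ht.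
set t := dot d1 (cross d2 d3) in ht.
set e1 := p' (fV u1) - p' (fV w0); set e2 := p' (fV u2) - p' (fV w0).
set e3 := p' (fV u3) - p' (fV w0).
pose L := t^-1 *: ((cross d2 d3)^T *m e1 + (cross d3 d1)^T *m e2 + (cross d1 d2)^T *m e3).
have hL : forall z, z *m L = t^-1 *: (dot z (cross d2 d3) *: e1 +
    dot z (cross d3 d1) *: e2 + dot z (cross d1 d2) *: e3).
  by move=> z; rewrite /L Lform.
pose tt := p' (fV w0) - p w0 *m L.
pose ag x := p x *m L + tt = p' (fV x).
have agw0 : ag w0 by rewrite /ag /tt addrC subrK.
have agd : forall x, (p x - p w0) *m L = p' (fV x) - p' (fV w0) -> ag x.
  move=> x h; rewrite /ag; have -> : p x *m L = p' (fV x) - p' (fV w0) + p w0 *m L.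
    by rewrite -h -mulmxDl subrK.
  by rewrite /tt zm1.
have ag1 : ag u1.
  apply: agd; rewrite -/d1 hL -/t dot_crossr dot_crossl !scale0r !addr0.
  by rewrite scalerK.
have ag2 : ag u2.
  apply: agd; rewrite -/d2 hL dot_crossl dot_crossr triple_cyc1 -/t !scale0r addr0 add0r.
  by rewrite scalerK.
have ag3 : ag u3.
  apply: agd; rewrite -/d3 hL dot_crossl dot_crossr triple_cyc2 -/t !scale0r !add0r.
  by rewrite scalerK.
pose Good w := ag w /\ forall u, nb p w u -> ag u.
have G0 : Good w0 by split => // u /hall [->|[->|->]].
have Gcl : forall w u, Good w -> nb p w u -> Good u.
  move=> w u [agw hw] hwu; split; first exact: hw.
  move=> y huy; case: (eqVneq y w) => [->|hyw] //.
  have hwy : w != y by rewrite eq_sym.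
  have [G [hG huG hwG hyG]] := pair_face hs (nb_sym hwu) huy hwy.
  have [a [b [hab ha hb haG hbG]]] := face_nbrs hs hG hwG.
  exact (face_agree hv hG (hF G hG) hwG haG hbG hab (nb_neq ha) (nb_neq hb) agw
    (hw a ha) (hw b hb) hyG).
have agall : forall x, ag x.
  move=> x; have [nx [cx [hnx [hlex hex]]]] := vx_ex (hv x).
  have [wm [Gm hmax]] := exists_maxP (P := Good) (fun v => dot nx (p v)) G0.
  case: (eqVneq x wm) => [->|hxw]; first by case: Gm.
  have hpos : 0 < dot nx (p x - p wm).
    rewrite dotBr subr_gt0; have /eqP -> : dot nx (p x) == cx by rewrite hex.
    by rewrite lt_neqAle hlex hex eq_sym hxw.
  have [n' [c' hx']] := vx_ex (hv wm).
  have [u [hu hpu]] := up hs hx' hpos.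
  have := hmax u (Gcl _ _ Gm hu); rewrite leNgt -subr_gt0 -dotBr hpu //.
exists L, tt; split; last exact: agall.
case: (boolP (L \in unitmx)) => // hLu; exfalso.
move: hLu; rewrite unitmxE unitfE negbK -det_tr => /det0P [v hv0 hvL].
have [g hg1 hg2] := hbij.
have hc : forall y, dot v (p' y) = dot v tt.
  move=> y; rewrite -[y]hg2 -agall dotDr; rewrite dotC dotE -mulmxA.
  have -> : L *m v^T = 0 by rewrite -[L]trmxK -trmx_mul hvL trmx0.
  by rewrite mulmx0 mxE add0r.
have [y hy] := hfd' v (dot v tt) hv0.
by move: hy; rewrite hc eqxx.
Qed.
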